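(* Let $B$ be a finite supersoluble brace, and let $p$ be the smallest prime dividing $|B|$. If $C$ is a subbrace of $B$ with $|B:C|=p$, then $C$ is an ideal of $B$.
   Context: A brace (skew left brace) is a set $B$ with two binary operations $+$ and $\cdot$ such that $(B,+)$ and $(B,\cdot)$ are groups and $a(b+c)=ab-a+ac$ for all $a,b,c\in B$. A subbrace is a subset that is a subgroup of both groups. $\lambda_a(b)=-a+ab$ defines a homomorphism $\lambda\colon(B,\cdot)\to\operatorname{Aut}(B,+)$. An ideal is a subbrace normal in both groups and invariant under all $\lambda_b$; quotients by ideals are braces. $\operatorname{Soc}(B)=\operatorname{Ker}\lambda\cap Z(B,+)$. $B$ is supersoluble if there is a finite chain of ideals $\{0\}=I_0\le\dots\le I_n=B$ such that for each $i$, either $(I_{i+1}/I_i,+)$ is infinite cyclic and $I_{i+1}/I_i\le\operatorname{Soc}(B/I_i)$, or $I_{i+1}/I_i$ has prime order. For a subbrace $C$ of a finite brace, $|B:C|=|B|/|C|$. (The paper phrases $p$ as the smallest prime in $\pi(B,+)$, the set of primes that are orders of elements of $(B,+)$.) *)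

(* Defs.v *)
From mathcomp Require Import all_boot.

Set Implicit Arguments.
Unset Strict Implicit.
Unset Printing Implicit Defensive.

(* A finite skew left brace on the carrier finType T:
   (T, add) and (T, mul) are groups (add not assumed commutative) and
   a(b+c) = ab - a + ac. *)
Record brace (T : finType) := Brace {
  badd : T -> T -> T;
  bopp : T -> T;
  bzero : T;
  bmul : T -> T -> T;
  binv : T -> T;
  bone : T;
  baddA : forall x y z, badd x (badd y z) = badd (badd x y) z;
  badd0r : forall x, badd bzero x = x;
  baddr0 : forall x, badd x bzero = x;
  baddNr : forall x, badd (bopp x) x = bzero;
  baddrN : forall x, badd x (bopp x) = bzero;
  bmulA : forall x y z, bmul x (bmul y z) = bmul (bmul x y) z;
  bmul1r : forall x, bmul bone x = x;
  bmulr1 : forall x, bmul x bone = x;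
  bmulVr : forall x, bmul (binv x) x = bone;
  bmulrV : forall x, bmul x (binv x) = bone;
  brace_law : forall a b c,
    bmul a (badd b c) = badd (badd (bmul a b) (bopp a)) (bmul a c)
}.

Section BraceDefs.
Variables (T : finType) (B : brace T).

Definition blambda (a b : T) : T := badd B (bopp B a) (bmul B a b).

Definition is_subbrace (C : {set T}) : Prop :=
  [/\ bzero B \in C,
      {in C &, forall x y, badd B x y \in C} &
      {in C, forall x, bopp B x \in C}] /\
  [/\ bone B \in C,
      {in C &, forall x y, bmul B x y \in C} &
      {in C, forall x, binv B x \in C}].

Definition is_ideal (I : {set T}) : Prop :=
  [/\ is_subbrace I,
      forall a, {in I, forall x, badd B (badd B a x) (bopp B a) \in I},
      forall a, {in I, forall x, bmul B (bmul B a x) (binv B a) \in I} &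
      forall b, {in I, forall x, blambda b x \in I}].

(* Supersoluble (finite case): a finite chain of ideals
   {0} = I_0 <= ... <= I_n = B with every factor I_{i+1}/I_i of prime order
   (the infinite-cyclic alternative cannot occur for a finite brace). *)
Definition supersoluble : Prop :=
  exists (n : nat) (I : nat -> {set T}),
    [/\ I 0 = [set bzero B],
        I n = [set: T],
        (forall i, i <= n -> is_ideal (I i)) &
        (forall i, i < n ->
           I i \subset I i.+1 /\ prime (#|I i.+1| %/ #|I i|))].

End BraceDefs.

(* Main.v *)
Set Warnings "-notation-overridden,-redundant-canonical-projection".
From HB Require Import structures.
Require Import Defs.
From mathcomp Require Import all_boot all_fingroup all_solvable.
Set Implicit Arguments. Unset Strict Implicit. Unset Printing Implicit Defensive.
Section Gen.
Local Open Scope group_scope.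

Lemma fix_coset (gT : finGroupType) (I J : {group gT}) (f : gT -> gT) (q N : nat) :
  I \subset J -> prime q -> #|J| = (q * #|I|)%N ->
  {morph f : x y / x * y} -> (forall x, (f x \in I) = (x \in I)) ->
  {in J, forall x, f x \in J} -> (forall x, iter N f x = x) ->
  (forall r, prime r -> r %| N -> q <= r) ->
  {in J, forall j, j^-1 * f j \in I}.
Proof.
move=> sIJ pq cJ fM fI fJ fN qmin j jJ.
have f1 : f 1 = 1.
  by apply: (mulgI (f 1)); rewrite -fM !mulg1.
have fV x : f x^-1 = (f x)^-1.
  by apply: (mulgI (f x)); rewrite -fM !mulgV f1.
pose F k := iter k f.
have FM k : {morph F k : x y / x * y}.
  by elim: k => [//|k IH] x y /=; rewrite IH fM.
have FV k x : F k x^-1 = (F k x)^-1.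
  by elim: k => [//|k IH] /=; rewrite IH fV.
have FI k x : (F k x \in I) = (x \in I).
  by elim: k => [//|k IH] /=; rewrite fI IH.
have FJ k x : x \in J -> F k x \in J.
  by elim: k => [//|k IH] xJ /=; apply: fJ; apply: IH.
pose R x y := x^-1 * y \in I.
have Rf k x y : R (F k x) (F k y) = R x y.
  by rewrite /R -FV -FM FI.
have Rt x y z : R x y -> R y z -> R x z.
  by rewrite /R => h1 h2; have := groupM h1 h2; rewrite mulgA mulgK.
have Rs x y : R x y -> R y x.
  by rewrite /R => h; rewrite -groupV invgM invgK.
pose P d := R j (F d j).
have PD x y : P x -> P y -> P (x + y)%N.
  move=> hx hy; apply: Rt hx _; rewrite /P /F iterD -/(F x) -/(F y).
  by rewrite Rf.
have PB x y : P x -> P y -> y <= x -> P (x - y)%N.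
  move=> hx hy yx; rewrite /P.
  have e : F x j = F y (F (x - y) j) by rewrite /F -iterD subnKC.
  by rewrite -(Rf y); apply: Rt (Rs _ _ hy) _; rewrite -e.
have PM m d : P d -> P (m * d)%N.
  move=> hd; elim: m => [|m IH]; first by rewrite /P /R mul0n /= mulVg group1.
  by rewrite mulSn; apply: PD.
have PN : P N by rewrite /P /F fN /R mulVg group1.
have [jI | jNI] := boolP (j \in I).
  by rewrite groupM ?groupV // fI.
(* pigeonhole *)
have JI : #|J : I| = q.
  have := Lagrange sIJ; rewrite cJ mulnC => /eqP.
  by rewrite eqn_pmul2r ?cardG_gt0 // => /eqP.
pose g (k : 'I_q) := F k j *: (I : {set gT}).
have gS k : g k \in lcosets I J :\ (I : {set gT}).
  rewrite !inE mem_lcosets mulGSid // FJ // andbT.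
  apply/negP => /eqP e; move: (lcoset_refl I (F k j)); rewrite -/(g k) e FI.
  by rewrite (negbTE jNI).
have cS : #|lcosets I J :\ (I : {set gT})| = q.-1.
  move: (cardsD1 (I : {set gT}) (lcosets I J)).
  rewrite card_lcosets JI.
  have -> : (I : {set gT}) \in lcosets I J.
    by rewrite -{1}(lcoset1 I) mem_lcosets mulGSid // group1.
  by move=> ->.
have [a [b [ab bq gab]]] : exists a b : 'I_q, [/\ (a < b)%N, (b < q)%N & g a = g b].
  case: (boolP [exists a : 'I_q, exists b : 'I_q, (a < b) && (g a == g b)]).
    move/existsP => [a /existsP [b /andP [ab /eqP e]]].
    by exists a, b; split => //; apply: ltn_ord.
  move=> hn; exfalso.
  have ginj : injective g.
    move=> a b e; apply: val_inj => /=.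
    case: (ltngtP a b) => // h.
      by case/negP: hn; apply/existsP; exists a; apply/existsP; exists b; rewrite h e eqxx.
    by case/negP: hn; apply/existsP; exists b; apply/existsP; exists a; rewrite h e eqxx.
  have : #|g @: setT| <= #|lcosets I J :\ (I : {set gT})|.
    by apply: subset_leq_card; apply/subsetP => x /imsetP [k _ ->]; apply: gS.
  rewrite card_imset // cardsT card_ord cS.
  by move: (prime_gt0 pq); case: (q) => [|q'] //= _; rewrite ltnn.
have Pd : P (b - a)%N.
  have e : F b j = F a (F (b - a) j) by rewrite /F -iterD subnKC // ltnW.
  rewrite /P -(Rf a) -e /R.
  by move/lcoset_eqP: (esym gab); rewrite mem_lcoset.
pose Q d := (0 < d) && P d.
have exQ : exists d, Q d.
  by exists (b - a)%N; rewrite /Q subn_gt0 ab.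
case: (ex_minnP exQ) => d0 /andP [d0p Pd0] d0min.
have d0q : d0 < q.
  apply: leq_ltn_trans (d0min (b - a)%N _) _; first by rewrite /Q subn_gt0 ab.
  by apply: leq_ltn_trans (leq_subr _ _) bq.
have Pmod : P (N %% d0).
  have e : (N %% d0 = N - N %/ d0 * d0)%N by rewrite {2}(divn_eq N d0) addKn.
  rewrite e; apply: PB => //; first exact: PM.
  by rewrite {2}(divn_eq N d0) leq_addr.
have md0 : N %% d0 = 0%N.
  apply/eqP; apply: contraT => nz.
  have hQ : Q (N %% d0) by rewrite /Q lt0n nz Pmod.
  have := d0min _ hQ.
  by rewrite leqNgt ltn_pmod.
have dN : d0 %| N by rewrite /dvdn md0.
have d01 : d0 = 1%N.
  apply/eqP; rewrite eqn_leq d0p andbT; apply: contraT; rewrite -ltnNge => d0gt.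
  have pr := pdiv_prime d0gt.
  have := qmin _ pr (dvdn_trans (pdiv_dvd d0) dN).
  by rewrite leqNgt (leq_ltn_trans (pdiv_leq d0p) d0q).
by move: Pd0; rewrite d01.
Qed.

End Gen.

Definition addT (T : finType) (B : brace T) : Type := T.
HB.instance Definition _ (T : finType) (B : brace T) := Finite.on (addT B).
HB.instance Definition _ (T : finType) (B : brace T) :=
  Finite_isGroup.Build (addT B) (@baddA T B) (@badd0r T B) (@baddNr T B).
Definition mulT (T : finType) (B : brace T) : Type := T.
HB.instance Definition _ (T : finType) (B : brace T) := Finite.on (mulT B).
HB.instance Definition _ (T : finType) (B : brace T) :=
  Finite_isGroup.Build (mulT B) (@bmulA T B) (@bmul1r T B) (@bmulVr T B).

Section Brace.
Variables (T : finType) (B : brace T).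
Local Notation add := (badd B).
Local Notation opp := (bopp B).
Local Notation zero := (bzero B).
Local Notation mul := (bmul B).
Local Notation inv := (binv B).
Local Notation one := (bone B).
Local Notation lam := (blambda B).

Lemma addKl a x : add (opp a) (add a x) = x.
Proof. by rewrite baddA baddNr badd0r. Qed.
Lemma addKr a x : add a (add (opp a) x) = x.
Proof. by rewrite baddA baddrN badd0r. Qed.
Lemma add_inj a : injective (add a).
Proof. by move=> x y e; rewrite -(addKl a x) e addKl. Qed.
Lemma mulz a : mul a zero = a.
Proof.
have := brace_law B a zero zero; rewrite badd0r => e.
have : add (mul a zero) zero = add (mul a zero) (add (opp a) (mul a zero)).
  by rewrite baddr0 baddA {1}e.
move/add_inj => e2.
by rewrite -(addKr a (mul a zero)) -e2 baddr0.
Qed.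
Lemma one_zero : one = zero.
Proof. by rewrite -(mulz one) bmul1r. Qed.
Lemma oppz : opp zero = zero.
Proof. by rewrite -[LHS](baddr0 B) baddNr. Qed.
Lemma mul_lam a b : mul a b = add a (lam a b).
Proof. by rewrite /blambda addKr. Qed.
Lemma lamD a x y : lam a (add x y) = add (lam a x) (lam a y).
Proof. by rewrite /blambda brace_law !baddA. Qed.
Lemma lamM a b y : lam (mul a b) y = lam a (lam b y).
Proof.
apply: (@add_inj (mul a b)).
rewrite -(mul_lam (mul a b) y) -bmulA {1}(mul_lam b y) brace_law.
by rewrite (mul_lam a (lam b y)) -baddA addKl.
Qed.
Lemma lam1 y : lam one y = y.
Proof. by rewrite /blambda bmul1r one_zero oppz badd0r. Qed.
Lemma lamVK a y : lam (inv a) (lam a y) = y.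
Proof. by rewrite -lamM bmulVr lam1. Qed.
Lemma lamKV a y : lam a (lam (inv a) y) = y.
Proof. by rewrite -lamM bmulrV lam1. Qed.

Lemma card_addT : #|{: addT B}| = #|T|.
Proof. by apply: (@bij_eq_card (addT B) T (fun x => x)); exists (fun x => x). Qed.
Lemma card_mulT : #|{: mulT B}| = #|T|.
Proof. by apply: (@bij_eq_card (mulT B) T (fun x => x)); exists (fun x => x). Qed.

Definition sa (A : {set T}) : {set addT B} := (fun x : addT B => (x : T)) @^-1: A.
Definition sm (A : {set T}) : {set mulT B} := (fun x : mulT B => (x : T)) @^-1: A.
Lemma in_sa A (x : addT B) : (x \in sa A) = ((x : T) \in A).
Proof. by rewrite inE. Qed.
Lemma in_sm A (x : mulT B) : (x \in sm A) = ((x : T) \in A).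
Proof. by rewrite inE. Qed.
Lemma card_sa A : #|sa A| = #|A|.
Proof. by apply: on_card_preimset; exists (fun x => x). Qed.
Lemma card_sm A : #|sm A| = #|A|.
Proof. by apply: on_card_preimset; exists (fun x => x). Qed.

Lemma sa_gs A : is_subbrace B A -> group_set (sa A).
Proof.
move=> [[z0 aC oC] _]; apply/group_setP; split; first by rewrite in_sa.
by move=> x y; rewrite !in_sa; apply: aC.
Qed.
Lemma sm_gs A : is_subbrace B A -> group_set (sm A).
Proof.
move=> [_ [z0 aC oC]]; apply/group_setP; split; first by rewrite in_sm.
by move=> x y; rewrite !in_sm; apply: aC.
Qed.

Lemma conj_sa (A : {set T}) : (forall a, {in A, forall x, add (add a x) (opp a) \in A}) ->
  forall (x y : addT B), y \in sa A -> (y ^ x)%g \in sa A.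
Proof.
move=> h x y; rewrite !in_sa => yA.
rewrite conjgE mulgA -{2}(invgK x).
exact: h.
Qed.
Lemma conj_saE (A : {set T}) : (forall a, {in A, forall x, add (add a x) (opp a) \in A}) ->
  forall (x y : addT B), ((y ^ x)%g \in sa A) = (y \in sa A).
Proof.
move=> h x y; apply/idP/idP; last exact: conj_sa.
by move/(conj_sa h (x^-1)%g); rewrite conjgK.
Qed.
Lemma conj_sm (A : {set T}) : (forall a, {in A, forall x, mul (mul a x) (inv a) \in A}) ->
  forall (x y : mulT B), y \in sm A -> (y ^ x)%g \in sm A.
Proof.
move=> h x y; rewrite !in_sm => yA.
rewrite conjgE mulgA -{2}(invgK x).
exact: h.
Qed.
Lemma conj_smE (A : {set T}) : (forall a, {in A, forall x, mul (mul a x) (inv a) \in A}) ->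
  forall (x y : mulT B), ((y ^ x)%g \in sm A) = (y \in sm A).
Proof.
move=> h x y; apply/idP/idP; last exact: conj_sm.
by move/(conj_sm h (x^-1)%g); rewrite conjgK.
Qed.

Lemma iter_lam (x : mulT B) y k : iter k (lam x) y = lam (x ^+ k)%g y.
Proof.
elim: k => [|k IH] /=; first by rewrite lam1.
by rewrite IH expgS lamM.
Qed.

End Brace.

Lemma iter_conj (gT : finGroupType) (x y : gT) k :
  iter k (fun z => (z ^ x)%g) y = (y ^ (x ^+ k))%g.
Proof.
elim: k => [|k IH] /=; first by rewrite conjg1.
by rewrite IH expgSr conjgM.
Qed.

Section Key.
Variables (T : finType) (B : brace T).
Local Notation add := (badd B).
Local Notation opp := (bopp B).
Local Notation zero := (bzero B).
Local Notation mul := (bmul B).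
Local Notation inv := (binv B).
Local Notation one := (bone B).
Local Notation lam := (blambda B).

Lemma key (p : nat) (C I J : {set T}) :
  prime p -> (forall q, prime q -> q %| #|T| -> p <= q) ->
  is_subbrace B C -> #|T| = (p * #|C|)%N ->
  is_ideal B I -> is_ideal B J -> I \subset J -> prime (#|J| %/ #|I|) ->
  I \subset C -> ~~ (J \subset C) -> is_ideal B C.
Proof.
move=> pp pmin sbC cT [sbI nIa nIm lI] [sbJ nJa nJm lJ] sIJ pq sIC nJC.
pose Ia : {group addT B} := Group (sa_gs sbI).
pose Ja : {group addT B} := Group (sa_gs sbJ).
pose Ca : {group addT B} := Group (sa_gs sbC).
pose Im : {group mulT B} := Group (sm_gs sbI).
pose Jm : {group mulT B} := Group (sm_gs sbJ).
pose Cm : {group mulT B} := Group (sm_gs sbC).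
have inIa x : (x \in Ia) = (x \in I) by rewrite /= in_sa.
have inJa x : (x \in Ja) = (x \in J) by rewrite /= in_sa.
have inCa x : (x \in Ca) = (x \in C) by rewrite /= in_sa.
have inIm x : (x \in Im) = (x \in I) by rewrite /= in_sm.
have inJm x : (x \in Jm) = (x \in J) by rewrite /= in_sm.
have inCm x : (x \in Cm) = (x \in C) by rewrite /= in_sm.
have sIJa : Ia \subset Ja.
  by apply/subsetP => x; rewrite inIa inJa; apply: (subsetP sIJ).
have sICa : Ia \subset Ca.
  by apply/subsetP => x; rewrite inIa inCa; apply: (subsetP sIC).
pose q := (#|J| %/ #|I|)%N.
have cJ : #|J| = (q * #|I|)%N.
  by rewrite divnK // -(card_sa B I) -(card_sa B J); apply: (cardSg sIJa).
have I0 : 0 < #|I|.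
  by rewrite -(card_sa B I); apply: (cardG_gt0 Ia).
have cIa : #|Ia| = #|I| := card_sa B I.
have cJa : #|Ja| = #|J| := card_sa B J.
have cCa : #|Ca| = #|C| := card_sa B C.
have nCJ : ~~ (Ja \subset Ca).
  apply: contra nJC => h; apply/subsetP => x xJ.
  by rewrite -inCa (subsetP h) // inJa.
have cCJ : #|Ca :&: Ja| = #|I|.
  have sI_CJ : Ia \subset Ca :&: Ja by rewrite subsetI sICa sIJa.
  have d1 := cardSg sI_CJ; rewrite cIa in d1.
  have d2 := cardSg (subsetIr Ca Ja); rewrite cJa in d2.
  have [t et] : exists t, #|Ca :&: Ja| = (t * #|I|)%N.
    by exists (#|Ca :&: Ja| %/ #|I|); rewrite divnK.
  have tq : t %| q.
    by move: d2; rewrite et cJ dvdn_pmul2r.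
  case/primeP: pq => _ /(_ t tq) /orP [/eqP t1 | /eqP tq'].
    by rewrite et t1 mul1n.
  exfalso; case/negP: nCJ.
  have e : Ca :&: Ja = Ja.
    by apply/eqP; rewrite eqEcard subsetIr cJa et tq' -cJ leqnn.
  by rewrite -e subsetIl.
have cardT_a : #|[set: addT B]| = #|T| by rewrite cardsT card_addT.
have qp : q = p.
  have qT : q %| #|T|.
    apply: dvdn_trans (dvdn_mulr #|I| (dvdnn q)) _; rewrite -cJ -cJa -cardT_a.
    exact: cardSg (subsetT Ja).
  have pq' := pmin q pq qT.
  have := mul_cardG Ca Ja; rewrite cCJ cCa cJa cJ => e.
  have : #|(Ca * Ja)%g| <= #|T| by rewrite -cardT_a; apply: subset_leq_card; exact: subsetT.
  rewrite cT => h.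
  have C0 : 0 < #|C| by rewrite -cCa cardG_gt0.
  have : (q * (#|C| * #|I|) <= p * (#|C| * #|I|))%N.
    rewrite mulnCA e mulnA leq_mul2r h orbT //.
  rewrite leq_pmul2r ?muln_gt0 ?C0 // => qp'.
  by apply/eqP; rewrite eqn_leq qp' pq'.
have CJT : (Ca * Ja)%g = [set: addT B].
  apply/eqP; rewrite eqEcard subsetT cardT_a.
  have := mul_cardG Ca Ja; rewrite cCJ cCa cJa cJ qp mulnA [(#|C| * p)%N]mulnC -cT/=.
  by move/eqP; rewrite eqn_pmul2r // => /eqP <-.
have decompA : forall b : addT B, exists c j : addT B,
    [/\ c \in C, j \in J & b = (c * j)%g].
  move=> b; have : b \in (Ca * Ja)%g by rewrite CJT inE.
  by case/mulsgP => c j cC jJ ->; exists c, j; rewrite -inCa -inJa.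
have cardT_m : #|[set: mulT B]| = #|T| by rewrite cardsT card_mulT.
have qmin : forall r, prime r -> r %| #|T| -> q <= r.
  by move=> r pr rT; rewrite qp; exact: pmin.
have F1 : forall x j : addT B, j \in J -> (j^-1 * j ^ x)%g \in I.
  move=> x j jJ; rewrite -inIa.
  apply: (@fix_coset _ Ia Ja (fun z => (z ^ x)%g) q #|T|) => //.
  - by rewrite cJa cIa.
  - by move=> y z; exact: conjMg.
  - by move=> y; exact: (conj_saE nIa x y).
  - by move=> y yJ; apply: (conj_sa nJa).
  - by move=> y; rewrite iter_conj -cardT_a (expg_cardG (in_setT x)) conjg1.
  - by rewrite inJa.
have F2 : forall x j : mulT B, j \in J -> (j^-1 * j ^ x)%g \in I.
  move=> x j jJ; rewrite -inIm.
  apply: (@fix_coset _ Im Jm (fun z => (z ^ x)%g) q #|T|) => //.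
  - by rewrite /= !card_sm.
  - by move=> y z; exact: conjMg.
  - by move=> y; exact: (conj_smE nIm x y).
  - by move=> y yJ; apply: (conj_sm nJm).
  - by move=> y; rewrite iter_conj -cardT_m (expg_cardG (in_setT x)) conjg1.
  - by rewrite inJm.
have F3 : forall (x : mulT B) (j : addT B), j \in J -> (j^-1 * lam x j)%g \in I.
  move=> x j jJ; rewrite -inIa.
  apply: (@fix_coset _ Ia Ja (lam x) q #|T|) => //.
  - by rewrite cJa cIa.
  - move=> y z; exact (lamD B x y z).
  - move=> y; rewrite !inIa; apply/idP/idP => h; last exact: lI.
    by rewrite -(lamVK B x y); apply: lI.
  - by move=> y; rewrite !inJa; apply: lJ.
  - move=> y; have := iter_lam x y #|T|; rewrite -{2}cardT_m (expg_cardG (in_setT x)) => e; exact (etrans e (lam1 B y)).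
  - by rewrite inJa.
have ItoC : forall x : T, x \in I -> x \in C by apply/subsetP.
have A2 : forall x j : addT B, x \in C -> j \in J -> (x ^ j)%g \in C.
  move=> x j xC jJ; have h := F1 x j jJ; rewrite -commgEl in h.
  have e : (x ^ j = x * [~ x, j])%g by rewrite commgEl mulKVg.
  rewrite e -inCa; apply: groupM; first by rewrite inCa.
  by rewrite -invgR groupV inCa; exact: ItoC.
have A2all : forall a x : addT B, x \in C -> (x ^ a)%g \in C.
  move=> a x xC; case: (decompA a) => c [j [cC jJ ->]].
  rewrite conjgM; apply: A2 => //.
  by rewrite -inCa groupJ ?inCa.
have decompM : forall b : mulT B, exists c j : mulT B,
    [/\ c \in C, j \in J & b = (c * j)%g].
  move=> b; case: (decompA b) => c [j [cC jJ e]].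
  exists c, (lam (inv c) j); split => //; first exact: lJ.
  rewrite [RHS](mul_lam B c) lamKV; exact e.
have A3 : forall x j : mulT B, x \in C -> j \in J -> (x ^ j)%g \in C.
  move=> x j xC jJ; have h := F2 x j jJ; rewrite -commgEl in h.
  have e : (x ^ j = x * [~ x, j])%g by rewrite commgEl mulKVg.
  rewrite e -inCm; apply: groupM; first by rewrite inCm.
  by rewrite -invgR groupV inCm; exact: ItoC.
have A3all : forall a x : mulT B, x \in C -> (x ^ a)%g \in C.
  move=> a x xC; case: (decompM a) => c [j [cC jJ ->]].
  rewrite conjgM; apply: A3 => //.
  by rewrite -inCm groupJ ?inCm.
have lamC : forall c x : T, c \in C -> x \in C -> lam c x \in C.
  move: (sbC) => [[_ aC oC] [_ mC _]] c x cC xC.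
  by rewrite /blambda aC ?oC ?mC.
have A4 : forall (x : T) (j : T), x \in C -> j \in J -> lam j x \in C.
  move=> x j xC jJ.
  pose m := ((j : mulT B) ^ (x : mulT B))%g.
  have mJ : m \in J.
    have : m \in sm B J by apply: (conj_sm nJm); rewrite in_sm.
    by rewrite in_sm.
  pose i1 := ((j : mulT B)^-1 * m)%g.
  have i1I : i1 \in I by apply: F2.
  have e1 : mul j x = mul x m.
    by rewrite /m conjgE; exact (esym (mulKVg (x : mulT B) ((j : mulT B) * x)%g)).
  have e2 : m = mul j i1 by exact (esym (mulKVg (j : mulT B) m)).
  pose i3 := lam x (lam j i1).
  have i3I : i3 \in I by exact: (lI _ _ (lI _ _ i1I)).
  have e3 : lam j x = ((((x : addT B) ^ (j : addT B)) * (((j : addT B)^-1 * lam x j) * i3)))%g.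
    have e4 : forall a b c d : addT B,
        (a^-1 * (b * (c * d)) = (b ^ a) * ((a^-1 * c) * d))%g.
      by move=> a b c d; rewrite conjgE !mulgA mulgK.
    rewrite [LHS]/blambda e1 (mul_lam B x m) e2 (mul_lam B j i1) lamD.
    exact (e4 j x (lam x j) i3).
  rewrite e3 -inCa; apply: groupM; first by rewrite inCa; apply: A2.
  by apply: groupM; rewrite inCa; apply: ItoC => //; exact: F3.
split => //.
- move=> a x xC; have := A2all ((a : addT B)^-1)%g x xC.
  rewrite conjgE invgK mulgA => h; exact h.
- move=> a x xC; have := A3all ((a : mulT B)^-1)%g x xC.
  rewrite conjgE invgK mulgA => h; exact h.
- move=> b x xC; case: (decompM b) => c [j [cC jJ ->]].
  have h : lam c (lam j x) \in C by apply: lamC => //; apply: A4.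
  move: h; rewrite -(lamM B c j x) => h; exact h.
Qed.
End Key.

Theorem theorem3p22 (T : finType) (B : brace T) (p : nat) (C : {set T}) :
  supersoluble B ->
  prime p -> p %| #|T| -> (forall q, prime q -> q %| #|T| -> p <= q) ->
  is_subbrace B C -> #|T| = (p * #|C|)%N ->
  is_ideal B C.
Proof.
move=> [n [Is [I0 In Iid Ich]]] pp pdT pmin sbC cT.
have z0 : bzero B \in C by case: sbC => [[]].
have ex : exists k, (k <= n) && (Is k \subset C).
  by exists 0; rewrite I0 sub1set z0.
have bnd : forall k, (k <= n) && (Is k \subset C) -> k <= n by move=> k /andP[].
case: (ex_maxnP ex bnd) => k /andP [kn sIC] kmax.
have C0 : 0 < #|C| by apply/card_gt0P; exists (bzero B).
have kn' : k < n.
  rewrite ltn_neqAle kn andbT; apply/eqP => ekn; move: sIC.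
  rewrite ekn In => /subset_leq_card; rewrite cardsT cT.
  rewrite -{2}[#|C|]mul1n leq_pmul2r //.
  by rewrite leqNgt prime_gt1.
have nJC : ~~ (Is k.+1 \subset C).
  apply/negP => h; have := kmax k.+1; rewrite kn' h => /(_ isT).
  by rewrite ltnn.
have [sIJ pr] := Ich k kn'.
exact: (key pp pmin sbC cT (Iid k kn) (Iid k.+1 kn') sIJ pr sIC nJC).
Qed.
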